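(* Let $H$ be a 0-SYM filter such that: - $\operatorname{sign}(H(i))=1$; - the set of solutions of $H(z)=1$ lying on the unit circle $\{|z|=1\}$ is exactly $\{1\}$. Then $H(e^{i\xi})>0$ for all $\xi\in(-\pi,\pi)$.
   Context: A 0-SYM filter is a rational function $H(z)$ with real coefficients satisfying $H(z)^2+H(-z)^2=1$ and $H(z)=H(z^{-1})$. For such $H$ one has $H(i)=\pm1/\sqrt2$. *)

(* Defs.v *)
From HB Require Import structures.
From mathcomp Require Import all_boot all_order all_algebra.
From mathcomp Require Import all_classical all_reals all_analysis.
From mathcomp Require Import complex.
Set Implicit Arguments. Unset Strict Implicit. Unset Printing Implicit Defensive.
Import Order.TTheory GRing.Theory Num.Theory.
Local Open Scope ring_scope.

(* A rational function with real coefficients, given in reduced form p/q,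
   evaluated at a complex point z (value p(z)/q(z); it is only meaningful
   when q(z) <> 0). *)
Definition ratf_eval (R : realType) (p q : {poly R}) (z : R[i]) : R[i] :=
  (map_poly (real_complex R) p).[z] / (map_poly (real_complex R) q).[z].

Definition ratf_dom (R : realType) (q : {poly R}) (z : R[i]) : Prop :=
  (map_poly (real_complex R) q).[z] != 0.

(* 0-SYM filter: H(z)^2 + H(-z)^2 = 1 and H(z) = H(z^-1), as identities of
   rational functions; for p/q in lowest terms (q <> 0, coprime p q) this is
   equivalent to the identities holding at every point where both sides are
   defined. *)
Definition zero_sym (R : realType) (p q : {poly R}) : Prop :=
  [/\ q != 0, coprimep p q,
      (forall z : R[i], ratf_dom q z -> ratf_dom q (- z) ->
         ratf_eval p q z ^+ 2 + ratf_eval p q (- z) ^+ 2 = 1) &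
      (forall z : R[i], z != 0 -> ratf_dom q z -> ratf_dom q z^-1 ->
         ratf_eval p q z = ratf_eval p q z^-1)].

Definition expi (R : realType) (xi : R) : R[i] := (cos xi +i* sin xi)%C.

(* Main.v *)
Require Import Defs.
From HB Require Import structures.
From mathcomp Require Import all_boot all_order all_algebra.
From mathcomp Require Import all_classical all_reals all_analysis.
From mathcomp Require Import complex.
From mathcomp Require Import ring lra.
Import Order.TTheory GRing.Theory Num.Theory.
Import numFieldNormedType.Exports.
Local Open Scope ring_scope.
Local Open Scope complex_scope.
Local Notation Re := (@complex.Re _).
Local Notation Im := (@complex.Im _).

Section S.
Variable R : realType.
Local Notation C := R[i].

Lemma ReM (a b : C) : Re (a * b) = Re a * Re b - Im a * Im b.
Proof. by case: a => ? ?; case: b. Qed.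
Lemma ImM (a b : C) : Im (a * b) = Re a * Im b + Im a * Re b.
Proof. by case: a => ? ?; case: b. Qed.
Lemma ReD (a b : C) : Re (a + b) = Re a + Re b.
Proof. by case: a => ? ?; case: b. Qed.
Lemma ImD (a b : C) : Im (a + b) = Im a + Im b.
Proof. by case: a => ? ?; case: b. Qed.
Lemma ReN (a : C) : Re (- a) = - Re a.
Proof. by case: a. Qed.
Lemma ImN (a : C) : Im (- a) = - Im a.
Proof. by case: a. Qed.
Lemma ReC (x : R) : Re (x%:C) = x. Proof. by []. Qed.
Lemma ImC (x : R) : Im (x%:C) = 0. Proof. by []. Qed.

Lemma conj_real_eq (a : C) : a^*%C = a -> a = (Re a)%:C.
Proof.
case: a => a b /= [] h; apply/eqP; rewrite eq_complex /= eqxx /=.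
apply/eqP; lra.
Qed.

Lemma expi_conj (xi : R) : expi xi * (expi xi)^*%C = 1.
Proof.
rewrite /expi /=; apply/eqP; rewrite eq_complex /=; apply/andP; split; apply/eqP.
  by rewrite mulrN opprK -!expr2 cos2Dsin2.
by rewrite mulrN mulrC addNr.
Qed.

Lemma conj_unit (w : C) : w * w^*%C = 1 -> w^-1 = w^*%C.
Proof.
move=> h; have w0 : w != 0 by apply/eqP => w0; move: h; rewrite w0 mul0r => /eqP; rewrite eq_sym oner_eq0.
by apply: (mulfI w0); rewrite divff.
Qed.

Lemma normc_expi (xi : R) : `|expi xi| = 1.
Proof. by rewrite normc_def /= cos2Dsin2 sqrtr1. Qed.

Lemma norm_gt0 (a : C) : a != 0 -> 0 < Re a ^+ 2 + Im a ^+ 2.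
Proof.
case: a => a b /= h; rewrite lt_def addr_ge0 ?sqr_ge0 // andbT.
apply/negP; rewrite paddr_eq0 ?sqr_ge0 // !sqrf_eq0 => /andP[/eqP ha /eqP hb].
by move: h; rewrite ha hb; apply/negP; rewrite negbK.
Qed.

Lemma conj_horner (p : {poly R}) (z : C) :
  ((map_poly (real_complex R) p).[z])^*%C = (map_poly (real_complex R) p).[z^*%C].
Proof.
rewrite -horner_map /= -map_poly_comp; congr (_.[_]).
by apply: eq_map_poly => x /=; exact: conjc_real.
Qed.

Lemma cont_horner (P : {poly C}) (w : R -> C) :
  continuous (fun t : R => Re (w t)) -> continuous (fun t : R => Im (w t)) ->
  continuous (fun t : R => Re P.[w t]) /\ continuous (fun t : R => Im P.[w t]).
Proof.
move=> cr ci; elim/poly_ind: P => [|P c [IHr IHi]].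
  have -> : (fun t : R => Re (0 : {poly C}).[w t]) = fun _ : R => (0 : R).
    by apply: funext => t; rewrite horner0.
  have -> : (fun t : R => Im (0 : {poly C}).[w t]) = fun _ : R => (0 : R).
    by apply: funext => t; rewrite horner0.
  by split => x; apply: cst_continuous.
have -> : (fun t : R => Re (P * 'X + c%:P).[w t]) =
   (fun t : R => Re P.[w t]) \* (fun t : R => Re (w t)) - (fun t : R => Im P.[w t]) \* (fun t : R => Im (w t)) + (fun _ : R => Re c).
  by apply: funext => t; rewrite hornerMXaddC ReD ReM.
have -> : (fun t : R => Im (P * 'X + c%:P).[w t]) =
   (fun t : R => Re P.[w t]) \* (fun t : R => Im (w t)) + (fun t : R => Im P.[w t]) \* (fun t : R => Re (w t)) + (fun _ : R => Im c).
  by apply: funext => t; rewrite hornerMXaddC ImD ImM.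
split => x.
  apply: continuousD; last exact: cst_continuous.
  by apply: continuousB; apply: continuousM; first [exact: IHr|exact: cr|exact: IHi|exact: ci].
apply: continuousD; last exact: cst_continuous.
by apply: continuousD; apply: continuousM; first [exact: IHr|exact: cr|exact: IHi|exact: ci].
Qed.

Lemma expi_neq (a b : R) : 0 < a - b < pi -> expi a != expi b.
Proof.
move=> hab; apply/negP => /eqP[ca sa].
have := sin_gt0_pi hab; rewrite sinB ca sa.
by rewrite [X in X - _]mulrC subrr ltxx.
Qed.

Lemma cont_cos_e : continuous (fun t : R => Re (expi t)).
Proof. exact: continuous_cos. Qed.
Lemma cont_sin_e : continuous (fun t : R => Im (expi t)).
Proof. exact: continuous_sin. Qed.
Lemma cont_cos_me : continuous (fun t : R => Re (- expi t)).
Proof. by move=> x; apply: continuousN; apply: continuous_cos. Qed.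
Lemma cont_sin_me : continuous (fun t : R => Im (- expi t)).
Proof. by move=> x; apply: continuousN; apply: continuous_sin. Qed.

Variables (p q : {poly R}).
Local Notation pc := (map_poly (real_complex R) p).
Local Notation qc := (map_poly (real_complex R) q).
Local Notation H := (ratf_eval p q).
Hypothesis hz : zero_sym p q.

Lemma dom_conj w : ratf_dom q w -> ratf_dom q w^*%C.
Proof. by rewrite /ratf_dom -conj_horner conjc_eq0. Qed.

Lemma H_conj w : H w^*%C = (H w)^*%C.
Proof. by rewrite /ratf_eval fmorph_div /= !conj_horner. Qed.

Lemma real_on_circle (w : C) : w * w^*%C = 1 -> ratf_dom q w -> H w = (Re (H w))%:C.
Proof.
move=> hw dw; apply: conj_real_eq.
have w0 : w != 0 by apply/eqP => w0; move: hw; rewrite w0 mul0r => /eqP; rewrite eq_sym oner_eq0.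
case: hz => _ _ _ hs.
rewrite -H_conj -(conj_unit _ hw) -hs //.
by rewrite (conj_unit _ hw); apply: dom_conj.
Qed.

Lemma circleN (w : C) : w * w^*%C = 1 -> (- w) * (- w)^*%C = 1.
Proof. by rewrite rmorphN mulrNN. Qed.

Lemma sq_sum (w : C) : w * w^*%C = 1 -> ratf_dom q w -> ratf_dom q (- w) ->
  Re (H w) ^+ 2 + Re (H (- w)) ^+ 2 = 1.
Proof.
move=> hw d1 d2; case: hz => _ _ h _.
have := h w d1 d2; rewrite (real_on_circle _ hw d1) (real_on_circle _ (circleN _ hw) d2).
rewrite -!rmorphXn -rmorphD -(rmorph1 (real_complex R)).
by apply: complexI.
Qed.

Lemma pc_eq w : ratf_dom q w -> pc.[w] = H w * qc.[w].
Proof. by move=> d; rewrite /ratf_eval divfK. Qed.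


Lemma F_le (w : C) : w * w^*%C = 1 -> ratf_dom q w -> ratf_dom q (- w) ->
  Re pc.[w] * Re pc.[w] + Im pc.[w] * Im pc.[w] <=
  Re qc.[w] * Re qc.[w] + Im qc.[w] * Im qc.[w].
Proof.
move=> hw d1 d2; have hs := sq_sum _ hw d1 d2.
have hx := real_on_circle _ hw d1.
rewrite pc_eq // hx ReM ImM /=.
move: hs; set x := Re (H w); set y := Re (H (- w)) => hs.
set a := Re qc.[w]; set b := Im qc.[w].
have : x ^+ 2 <= 1 by rewrite -hs lerDl sqr_ge0.
move=> hx2; nra.
Qed.


Lemma no_pole xi : ratf_dom q (expi xi).
Proof.
case: (hz) => q0 cop _ _.
rewrite /ratf_dom; apply/negP => /eqP qz.
have cop' : coprimep qc pc by rewrite coprimep_sym coprimep_map.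
have pz : pc.[expi xi] != 0 by apply: (coprimep_root cop'); rewrite /root qz.
pose F : R -> R := ((fun t : R => Re pc.[expi t]) \* (fun t : R => Re pc.[expi t]) +
           (fun t : R => Im pc.[expi t]) \* (fun t : R => Im pc.[expi t])) -
          ((fun t : R => Re qc.[expi t]) \* (fun t : R => Re qc.[expi t]) +
           (fun t : R => Im qc.[expi t]) \* (fun t : R => Im qc.[expi t])).
have Fc : continuous F.
  have [h1 h2] := cont_horner pc _ cont_cos_e cont_sin_e.
  have [h3 h4] := cont_horner qc _ cont_cos_e cont_sin_e.
  move=> x; apply: continuousB; apply: continuousD; apply: continuousM;
    first [exact: h1|exact: h2|exact: h3|exact: h4].
have Fx : 0 < F xi.
  rewrite /F /= !fctE /= qz /= !mul0r addr0 subr0 -!expr2; exact: norm_gt0.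
have [e e0 he] : exists2 e, 0 < e & forall t, `|xi - t| < e -> 0 < F t.
  have := cvgr_gt (F xi) (Fc xi) 0 Fx.
  move=> hn; have [e /= e0 he] := (nbhs_ballP _ _).1 (hn (nbhs_filter xi)); exists e => // t ht; apply: he.
pose T := qc * (qc \Po (- 'X)).
have T0 : T != 0.
  rewrite mulf_neq0 //; first by rewrite map_poly_eq0.
  rewrite -size_poly_eq0 size_comp_poly2 ?size_polyN ?size_polyX //.
  by rewrite size_poly_eq0 map_poly_eq0.
have Troot : forall t, `|xi - t| < e -> root T (expi t).
  move=> t ht; rewrite /root hornerM horner_comp hornerN hornerX mulf_eq0.
  apply/negPn/negP => /norP [h1 h2].
  have := F_le _ (expi_conj t) h1 h2.
  have := he t ht; rewrite /F /= !fctE /=; lra.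
set N := size T.
set m := Num.min e 1.
have m0 : 0 < m by rewrite lt_min e0 ltr01.
have me : m <= e by rewrite ge_min lexx.
have m1 : m <= 1 by rewrite ge_min lexx orbT.
have N0 : (N.+1%:R : R) != 0 by rewrite pnatr_eq0.
set d := m / N.+1%:R.
have d0 : 0 < d by rewrite divr_gt0 // ltr0n.
have dN : d * N.+1%:R = m by rewrite /d divfK.
have pi2 := pi_ge2 R.
pose rs := [seq expi (xi + d * k%:R) | k <- iota 0 N.+1].
have H1 : all (root T) rs.
  apply/allP => w /mapP [k]; rewrite mem_iota add0n => /andP [_ hk] ->.
  apply: Troot; rewrite opprD addrA subrr sub0r normrN ger0_norm; last first.
    by rewrite mulr_ge0 ?ler0n ?ltW.
  have : d * k%:R < d * N.+1%:R by rewrite ltr_pM2l // ltr_nat.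
  rewrite dN => hk'; lra.
have H2 : uniq rs.
rewrite /rs map_inj_in_uniq ?iota_uniq // => k j; rewrite !mem_iota !add0n.
move=> /andP [_ hk] /andP [_ hj] heq.
have hk' : (k%:R : R) < N.+1%:R by rewrite ltr_nat.
have hj' : (j%:R : R) < N.+1%:R by rewrite ltr_nat.
have k0 : (0 : R) <= k%:R by rewrite ler0n.
have j0 : (0 : R) <= j%:R by rewrite ler0n.
case: (ltngtP k j) => // hkj; exfalso.
  have hkj' : (k%:R : R) < j%:R by rewrite ltr_nat.
  move: heq; apply/eqP; rewrite eq_sym; apply: expi_neq.
  apply/andP; split; nra.
have hkj' : (j%:R : R) < k%:R by rewrite ltr_nat.
move: heq; apply/eqP; apply: expi_neq.
apply/andP; split; nra.
have := max_poly_roots T0 H1 H2.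
by rewrite size_map size_iota -/N ltnNge leqnSn.
Qed.


Lemma neg_expi (t : R) : - expi t = expi (t + pi).
Proof. by apply/eqP; rewrite eq_complex /= cosDpi sinDpi !eqxx. Qed.

Lemma domN (t : R) : ratf_dom q (- expi t).
Proof. by rewrite neg_expi; apply: no_pole. Qed.

Lemma A_eq (w : C) : w * w^*%C = 1 -> ratf_dom q w ->
  Re pc.[w] * Re qc.[w] + Im pc.[w] * Im qc.[w] =
  Re (H w) * (Re qc.[w] * Re qc.[w] + Im qc.[w] * Im qc.[w]).
Proof.
move=> hw d; have hx := real_on_circle _ hw d.
rewrite pc_eq // hx ReM ImM /=.
set x := Re (H w); set a := Re qc.[w]; set b := Im qc.[w].
ring.
Qed.

Lemma sg_pos (a : R) : Num.sg (a%:C) = 1 -> 0 < a.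
Proof.
case: (ltrgtP a 0) => // ha.
- move=> h; have : a%:C < 0 by rewrite ltcR.
  move=> /ltr0_sg; rewrite h => /eqP; rewrite eq_complex /= => /andP [/eqP h1 _].
  by move: h1; lra.
- by move: ha => ->; rewrite sgr0 => /eqP; rewrite eq_sym oner_eq0.
Qed.


Hypothesis hsg : Num.sg (H 'i%C) = 1.
Hypothesis hone : forall z : C, (`|z| = 1 /\ ratf_dom q z /\ H z = 1) <-> z = 1.

Local Notation x1 t := (Re (H (expi t))).
Local Notation x2 t := (Re (H (- expi t))).
Local Notation N1 t := (Re qc.[expi t] * Re qc.[expi t] + Im qc.[expi t] * Im qc.[expi t]).
Local Notation N2 t := (Re qc.[- expi t] * Re qc.[- expi t] + Im qc.[- expi t] * Im qc.[- expi t]).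

Definition A1f : R -> R := (fun t : R => Re pc.[expi t]) \* (fun t : R => Re qc.[expi t]) +
   (fun t : R => Im pc.[expi t]) \* (fun t : R => Im qc.[expi t]).
Definition A2f : R -> R := (fun t : R => Re pc.[- expi t]) \* (fun t : R => Re qc.[- expi t]) +
   (fun t : R => Im pc.[- expi t]) \* (fun t : R => Im qc.[- expi t]).
Definition N1f : R -> R := (fun t : R => Re qc.[expi t]) \* (fun t : R => Re qc.[expi t]) +
   (fun t : R => Im qc.[expi t]) \* (fun t : R => Im qc.[expi t]).
Definition N2f : R -> R := (fun t : R => Re qc.[- expi t]) \* (fun t : R => Re qc.[- expi t]) +
   (fun t : R => Im qc.[- expi t]) \* (fun t : R => Im qc.[- expi t]).
Definition G : R -> R := A1f \* N2f + A2f \* N1f - N1f \* N2f.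

Lemma Gc : continuous G.
Proof.
have [h1 h2] := cont_horner pc _ cont_cos_e cont_sin_e.
have [h3 h4] := cont_horner qc _ cont_cos_e cont_sin_e.
have [h5 h6] := cont_horner pc _ cont_cos_me cont_sin_me.
have [h7 h8] := cont_horner qc _ cont_cos_me cont_sin_me.
have c1 : continuous A1f.
  by move=> x; apply: continuousD; apply: continuousM; [exact: h1|exact: h3|exact: h2|exact: h4].
have c2 : continuous A2f.
  by move=> x; apply: continuousD; apply: continuousM; [exact: h5|exact: h7|exact: h6|exact: h8].
have c3 : continuous N1f.
  by move=> x; apply: continuousD; apply: continuousM; [exact: h3|exact: h3|exact: h4|exact: h4].
have c4 : continuous N2f.
  by move=> x; apply: continuousD; apply: continuousM; [exact: h7|exact: h7|exact: h8|exact: h8].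
move=> x; apply: continuousB; first apply: continuousD.
- by apply: continuousM; [exact: c1|exact: c4].
- by apply: continuousM; [exact: c2|exact: c3].
- by apply: continuousM; [exact: c3|exact: c4].
Qed.

Lemma G_eq t : G t = (x1 t + x2 t - 1) * N1 t * N2 t.
Proof.
rewrite /G /A1f /A2f /N1f /N2f /= !fctE /=.
rewrite (A_eq _ (expi_conj t) (no_pole t)).
rewrite (A_eq _ (circleN _ (expi_conj t)) (domN t)).
ring.
Qed.

Lemma N1_pos t : 0 < N1 t.
Proof. rewrite -!expr2; apply: norm_gt0; exact: no_pole. Qed.
Lemma N2_pos t : 0 < N2 t.
Proof. rewrite -!expr2; apply: norm_gt0; exact: domN. Qed.

Lemma sum_sq t : x1 t ^+ 2 + x2 t ^+ 2 = 1.
Proof. exact: (sq_sum _ (expi_conj t) (no_pole t) (domN t)). Qed.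


Lemma real1 (w : C) : w * w^*%C = 1 -> ratf_dom q w -> Re (H w) = 1 -> w = 1.
Proof.
move=> hw d h; apply/(hone w); split; last split => //.
- move: hw; rewrite normcE => ->; exact: sqrtc1.
- by rewrite (real_on_circle _ hw d) h.
Qed.

Lemma not_one (t : R) : 0 < t < pi -> x1 t != 1 /\ x2 t != 1.
Proof.
move=> ht; have s0 := sin_gt0_pi ht.
split; apply/eqP => h.
- have := real1 _ (expi_conj t) (no_pole t) h.
  move=> /(congr1 (@complex.Im R)) /= => h'; move: s0; rewrite h'; lra.
- have := real1 _ (circleN _ (expi_conj t)) (domN t) h.
  move=> /(congr1 (@complex.Im R)) /= => h'; move: s0; lra.
Qed.

Lemma G_ne0 (t : R) : 0 < t < pi -> G t != 0.
Proof.
move=> ht; have [n1 n2] := not_one _ ht.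
rewrite G_eq; apply: mulf_neq0; last exact: lt0r_neq0 (N2_pos t).
apply: mulf_neq0; last exact: lt0r_neq0 (N1_pos t).
have hs := sum_sq t.
rewrite subr_eq0; apply/eqP => hsum.
have : x1 t * x2 t = 0.
  have e2 : (x1 t + x2 t) ^+ 2 = 1 by rewrite hsum expr1n.
  move: hs e2; set a := x1 t; set b := x2 t => hs e2.
  have : a * b *+ 2 = 0 by rewrite -(subrr 1) -{1}e2 -hs sqrrD; ring.
  by move/eqP; rewrite mulrn_eq0 /= => /eqP.
move/eqP; rewrite mulf_eq0 => /orP [] /eqP h0.
- by move: n2; rewrite -hsum h0 add0r eqxx.
- by move: n1; rewrite -hsum h0 addr0 eqxx.
Qed.


Lemma expi_half : expi (pi / 2) = 'i%C :> C.
Proof. by rewrite /expi cos_pihalf sin_pihalf. Qed.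

Lemma G_half : 0 < G (pi / 2).
Proof.
have hw := expi_conj (pi / 2).
have d := no_pole (pi / 2).
have ex : - expi (pi / 2 : R) = (expi (pi / 2 : R))^*%C.
  by apply/eqP; rewrite eq_complex /= cos_pihalf oppr0 !eqxx.
have hx2 : x2 (pi / 2) = x1 (pi / 2).
  have w0 : expi (pi / 2 : R) != 0.
    by apply/eqP => w0; move: hw; rewrite w0 mul0r => /eqP; rewrite eq_sym oner_eq0.
  have di : ratf_dom q (expi (pi / 2 : R))^-1.
    by rewrite (conj_unit _ hw); apply: dom_conj.
  rewrite ex -(conj_unit _ hw); case: hz => _ _ _ hs.
  by rewrite -hs.
have hx1 : 0 < x1 (pi / 2).
  apply: sg_pos; rewrite -(real_on_circle _ hw d) expi_half; exact: hsg.
have hs := sum_sq (pi / 2).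
rewrite G_eq; apply: mulr_gt0; last exact: N2_pos.
apply: mulr_gt0; last exact: N1_pos.
move: hs hx1; rewrite hx2; set a := x1 (pi / 2) => hs ha; nra.
Qed.

Lemma G_pos (t : R) : 0 < t < pi -> 0 < G t.
Proof.
move=> /andP [t0 tpi].
have hh := G_half.
have pi0 := pi_gt0 R.
case: (ltrP 0 (G t)) => // hle; exfalso.
have ivt : forall a b, 0 < a -> a <= b -> b < pi ->
    ((G a <= 0) && (0 <= G b)) || ((G b <= 0) && (0 <= G a)) -> False.
  move=> a b a0 ab bpi hab.
  have [|c] := @IVT R G a b 0 ab (continuous_subspaceT Gc).
    rewrite ge_min le_max; case/orP: hab => /andP [h1 h2].
      by rewrite h1 h2 orbT.
    by rewrite h1 h2 orbT.
  rewrite in_itv /= => /andP [ac cb] Gc0.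
  have : 0 < c < pi by apply/andP; split; lra.
  by move=> /G_ne0; rewrite Gc0 eqxx.
case: (lerP t (pi / 2)) => ht.
- apply: (ivt t (pi / 2)); [exact: t0 | exact: ht | lra | ].
  by rewrite hle (ltW hh).
- apply: (ivt (pi / 2) t); [lra | exact: ltW | exact: tpi | ].
  by rewrite hle (ltW hh) orbT.
Qed.

Lemma both_pos (t : R) : 0 < t < pi -> 0 < x1 t /\ 0 < x2 t.
Proof.
move=> ht; have := G_pos _ ht; rewrite G_eq.
have n1 := N1_pos t; have n2 := N2_pos t.
rewrite pmulr_lgt0 // pmulr_lgt0 // subr_gt0 => hs1.
have hs := sum_sq t.
move: hs hs1; set a := x1 t; set b := x2 t => hs hs1.
split; nra.
Qed.

End S.

Theorem proposition1 (R : realType) (p q : {poly R}) :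
  zero_sym p q ->
  Num.sg (ratf_eval p q 'i%C) = 1 ->
  (forall z : R[i], (`|z| = 1 /\ ratf_dom q z /\ ratf_eval p q z = 1) <-> z = 1) ->
  forall xi : R, - pi < xi < pi -> 0 < ratf_eval p q (expi xi).
Proof.
move=> hz hsg hone xi /andP [xa xb].
have pi0 := pi_gt0 R.
case: (ltrgtP xi 0) => hx.
- set t := xi + pi.
  have ht : 0 < t < pi by apply/andP; split; rewrite /t; lra.
  have [_ h2] := @both_pos R p q hz hsg hone t ht.
  have -> : expi xi = - expi t by rewrite /t -neg_expi opprK.
  rewrite (@real_on_circle R p q hz _ (circleN _ _ (expi_conj _ t)) (@domN R p q hz t)).
  by rewrite ltcR.
- have ht : 0 < xi < pi by apply/andP; split.
  have [h1 _] := @both_pos R p q hz hsg hone xi ht.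
  rewrite (@real_on_circle R p q hz _ (expi_conj _ xi) (@no_pole R p q hz xi)).
  by rewrite ltcR.
- have e1 : expi xi = 1 by rewrite hx /expi cos0 sin0.
  rewrite e1; have [_ [_ ->]] := (hone 1).2 erefl.
  exact: ltr01.
Qed.
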